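(* Let $x_c\in\mathbb{R}^{n_0}$, $\varepsilon>0$, $\mathcal{X}=\{x:\|x-x_c\|_\infty\le\varepsilon\}$, and let $J:\mathbb{R}^{n_0}\to\mathbb{R}$ be twice continuously differentiable on an open set containing $\mathcal{X}$, with $\|\nabla^2J(x)\|_2\le\lambda$ for all $x\in\mathcal{X}$, where $\lambda>0$. For $y\in\mathcal{X}$ define $$\overline{J}^1(y)=J(y)+\sup_{x\in\mathcal{X}}\Big(\nabla J(y)^\top(x-y)+\frac{\lambda}{2}\|x-y\|_2^2\Big).$$ Let $\hat\delta=\varepsilon\,\mathrm{sign}(\nabla J(x_c))$ (elementwise, with $\mathrm{sign}(0)=0$), and let $y=x_c+\eta\hat\delta$. Then $\overline{J}^1(y)\le\overline{J}^1(x_c)$ for every $$\eta\in\Big[0,\ \min\Big(\min_i\frac{|\nabla J(x_c)_i|}{\lambda(\|\hat\delta\|_2+|\hat\delta_i|)},\,1\Big)\Big],$$ with the convention that if $\nabla J(x_c)=0$ (so $\hat\delta=0$ and $y=x_c$) the inner minimum is read as $+\infty$.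
   Context: $\hat\delta$ equals $x^*(x_c)-x_c$, where $x^*(x_c)=x_c+\varepsilon\,\mathrm{sign}(\nabla J(x_c))$ is the maximizer of the supremum defining $\overline{J}^1(x_c)$ for $p=\infty$. *)

(* Defs.v *)
(* Points of R^n are row vectors 'rV[R]_n, whose
   canonical norm `|x| (mx_norm) is the max (infinity) norm. *)
From HB Require Import structures.
From mathcomp Require Import all_boot all_order all_algebra.
From mathcomp Require Import all_classical all_reals all_analysis.
Set Implicit Arguments. Unset Strict Implicit. Unset Printing Implicit Defensive.
Import Order.TTheory GRing.Theory Num.Theory.
Import numFieldNormedType.Exports.
Local Open Scope classical_set_scope.
Local Open Scope ring_scope.

Section Defs.
Variables (R : realType) (n : nat).

Definition evec (i : 'I_n) : 'rV[R]_n := delta_mx 0 i.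

Definition norm2 (v : 'rV[R]_n) : R := Num.sqrt (\sum_i v 0 i ^+ 2).

Definition dotv (u v : 'rV[R]_n) : R := \sum_i u 0 i * v 0 i.

Definition pder (f : 'rV[R]_n -> R) (i : 'I_n) (x : 'rV[R]_n) : R :=
  'D_(evec i) f x.

Definition grad (f : 'rV[R]_n -> R) (x : 'rV[R]_n) : 'rV[R]_n :=
  \row_i pder f i x.

Definition hess (f : 'rV[R]_n -> R) (x : 'rV[R]_n) : 'M[R]_n :=
  \matrix_(i, j) pder (pder f i) j x.

Definition C2_on (U : set 'rV[R]_n) (f : 'rV[R]_n -> R) : Prop :=
  {within U, continuous f} /\
  (forall i, forall x, U x -> derivable f x (evec i)) /\
  (forall i, {within U, continuous (pder f i)}) /\
  (forall i j, forall x, U x -> derivable (pder f i) x (evec j)) /\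
  (forall i j, {within U, continuous (pder (pder f i) j)}).

Definition spec_norm (M : 'M[R]_n) : R :=
  sup [set norm2 (v *m M^T) | v in [set v | norm2 v <= 1]].

Definition sgv (v : 'rV[R]_n) : 'rV[R]_n := map_mx (fun a => Num.sg a) v.

Definition boxX (xc : 'rV[R]_n) (eps : R) : set 'rV[R]_n :=
  [set x | `|x - xc| <= eps].

Definition Jbar1 (J : 'rV[R]_n -> R) (lam : R) (X : set 'rV[R]_n)
  (y : 'rV[R]_n) : R :=
  J y + sup [set dotv (grad J y) (x - y) + lam / 2 * norm2 (x - y) ^+ 2
            | x in X].

End Defs.

(* Main.v *)
Require Import Defs.
From HB Require Import structures.
From mathcomp Require Import all_boot all_order all_algebra.
From mathcomp Require Import all_classical all_reals all_analysis.
From mathcomp Require Import ring lra.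
Import Order.TTheory GRing.Theory Num.Theory.
Import numFieldNormedType.Exports.
Local Open Scope classical_set_scope.
Local Open Scope ring_scope.
Section Aux.
Variable R : realType.

Lemma mvt_ex (f df : R -> R) (a b : R) : a <= b ->
  (forall t, a <= t <= b -> is_derive t 1 f (df t)) ->
  exists c, a <= c <= b /\ f b - f a = df c * (b - a).
Proof.
move=> ab H.
have [c cab E] : exists2 c, c \in `[a, b] & f b - f a = df c * (b - a).
  apply: MVT_segment => //.
    by move=> t; rewrite in_itv /= => /andP[/ltW ? /ltW ?]; apply: H; apply/andP.
  apply: derivable_within_continuous => t; rewrite in_itv /= => tab.
  by have := H t tab => -[].
by exists c; split => //; move: cab; rewrite in_itv.
Qed.

Lemma is_derive_lin (K t : R) : is_derive t 1 (fun s : R => K * s) K.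
Proof.
have := is_deriveZ K (@is_derive_id _ R t 1).
by rewrite /GRing.scale /= mulr1.
Qed.

Lemma mvt_bound (f df : R -> R) (a b K M : R) : a <= b ->
  (forall t, a <= t <= b -> is_derive t 1 f (df t) /\ `|df t - K| <= M) ->
  `|f b - f a - K * (b - a)| <= M * (b - a).
Proof.
move=> ab H.
have D : forall t, a <= t <= b ->
    is_derive t 1 (fun t => f t - K * t) (df t - K).
  move=> t ht; case: (H t ht) => d _.
  exact: (is_deriveB d (is_derive_lin K t)).
have [c [cab E]] := mvt_ex _ _ _ _ ab D.
have -> : f b - f a - K * (b - a) = (f b - K * b) - (f a - K * a) by ring.
rewrite E normrM (ger0_norm (x := b - a)); last by rewrite subr_ge0.
by apply: ler_wpM2r; [rewrite subr_ge0 | exact: (H c cab).2].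
Qed.

Lemma mvt_bound0 (f df : R -> R) (b K M : R) :
  (forall t : R, `|t| <= `|b| -> is_derive t 1 f (df t) /\ `|df t - K| <= M) ->
  `|f b - f 0 - K * b| <= M * `|b|.
Proof.
move=> H; have [b0|b0] := leP 0 b.
  have := mvt_bound f df 0 b K M b0.
  rewrite subr0 (ger0_norm b0); apply => t /andP[t0 tb]; apply: H.
  by rewrite (ger0_norm b0) ger0_norm.
have := mvt_bound f df b 0 K M (ltW b0).
rewrite sub0r (ltr0_norm b0) => H'.
have -> : f b - f 0 - K * b = - (f 0 - f b - K * - b) by ring.
rewrite normrN; apply: H' => t /andP[bt t0]; apply: H.
by rewrite (ltr0_norm b0) ler0_norm // lerN2.
Qed.

End Aux.
Section Aux2.
Variables (R : realType) (n : nat).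
Implicit Types (F : 'rV[R]_n -> R) (p v : 'rV[R]_n).

Lemma line_deriv F p v (t L : R) : is_derive (p + t *: v) v F L ->
  is_derive t 1 (fun s => F (p + s *: v)) L.
Proof.
case=> Hd Hv.
have E : (fun h : R => h^-1 *: (((fun s => F (p + s *: v)) \o shift t) (h *: 1)
           - F (p + t *: v))) =
         (fun h : R => h^-1 *: ((F \o shift (p + t *: v)) (h *: v) - F (p + t *: v))).
  apply/funext => h /=; congr (_ *: (F _ - _)).
  by rewrite /shift /= -[h%:A]/(h * 1) mulr1 scalerDl addrCA.
apply: DeriveDef; first by rewrite /derivable E.
by rewrite /derive E.
Qed.

End Aux2.
Section Aux3.
Variables (R : realType) (n : nat).
Implicit Types (F : 'rV[R]_n -> R) (p v w x : 'rV[R]_n).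

Lemma mxnorm_le (x : 'rV[R]_n) (c : R) : 0 <= c ->
  (forall i, `|x 0 i| <= c) -> `|x| <= c.
Proof.
move=> c0 H; have -> : `|x| = mx_norm x by [].
rewrite mx_normrE.
apply: bigmax_le => // -[i j] _ /=; by rewrite (ord1 i).
Qed.

Lemma mxnorm_entry (x : 'rV[R]_n) i : `|x 0 i| <= `|x|.
Proof.
have -> : `|x| = mx_norm x by [].
rewrite mx_normrE.
exact: (le_bigmax _ (fun ij : 'I_1 * 'I_n => `|x ij.1 ij.2|) (0, i)).
Qed.

Definition wk w (k : nat) : 'rV[R]_n := \row_j (if (j < k)%N then w 0 j else 0).

Lemma wk0 w : wk w 0 = 0.
Proof. by apply/rowP => j; rewrite !mxE. Qed.

Lemma wkn w : wk w n = w.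
Proof. by apply/rowP => j; rewrite !mxE ltn_ord. Qed.

Lemma wkS w (k : 'I_n) (h : R) :
  h *: wk w k + (h * w 0 k) *: evec R k = h *: wk w k.+1.
Proof.
apply/rowP => j; rewrite !mxE eqxx /=.
case: (ltngtP j k) => jk.
- by rewrite ltnS (ltnW jk) -val_eqE /= (ltn_eqF jk) mulr0 addr0.
- by rewrite ltnS leqNgt jk -val_eqE /= (gtn_eqF jk) !mulr0 addr0.
- have -> : j = k by apply: val_inj.
  by rewrite ltnS leqnn eqxx mulr0 add0r mulr1.
Qed.


Lemma dir_deriv F (U : set 'rV[R]_n) x w : open U -> U x ->
  (forall j z, U z -> derivable F z (evec R j)) ->
  (forall j, {for x, continuous (pder F j)}) ->
  is_derive x w F (\sum_j w 0 j * pder F j x).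
Proof.
move=> oU Ux Hd Hc.
set L := \sum_j _.
suff C : (fun h : R => h^-1 *: ((F \o shift x) (h *: w) - F x)) @ 0^' --> L.
  apply: DeriveDef; first by apply/cvg_ex; exists L.
  exact: (cvg_lim (@norm_hausdorff _ _) C).
apply/cvgrPdist_le => e e0.
set Sw := \sum_j `|w 0 j|.
have Sw0 : 0 <= Sw by apply: sumr_ge0 => j _.
set e' := e / (Sw + 1).
have e'0 : 0 < e' by rewrite divr_gt0 // ltr_wpDl.
have Hn : \forall z \near x, U z /\ forall j, `|pder F j z - pder F j x| <= e'.
  near=> z; split.
    by near: z; exact: (open_nbhs_nbhs (conj oU Ux)).
  near: z; apply: filter_forall => j.
  have := Hc j => /cvgrPdist_le /(_ _ e'0).
  by apply: filterS => z; rewrite distrC.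
move: Hn => /nbhs_normP [r /= r0 Hr].
have d0 : 0 < r / (`|w| + 1) by rewrite divr_gt0 // ltr_wpDl.
near=> h.
have hn0 : h != 0 by near: h; exact: nbhs_dnbhs_neq.
have hs : `|h| < r / (`|w| + 1) by near: h; exact: dnbhs0_lt.
have hw : `|h| * `|w| < r.
  apply: le_lt_trans (_ : `|h| * (`|w| + 1) < r).
    by rewrite ler_wpM2l // lerDl.
  by rewrite -ltr_pdivlMr // ltr_wpDl.
have key : `|F (h *: w + x) - F x - h * L| <= e' * (`|h| * Sw).
  have tel : F (h *: w + x) - F x =
      \sum_(k < n) (F (x + h *: wk w k.+1) - F (x + h *: wk w k)).
    have T := telescope_sumr (fun k => F (x + h *: wk w k)) (leq0n n).
    rewrite big_mkord /= wkn wk0 scaler0 addr0 in T.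
    by rewrite T [x + _]addrC.
  have hL : h * L = \sum_k h * w 0 k * pder F k x.
    by rewrite /L mulr_sumr; apply: eq_bigr => k _; rewrite mulrA.
  rewrite tel hL -sumrB.
  apply: le_trans (ler_norm_sum _ _ _) _.
  rewrite /Sw !mulr_sumr; apply: ler_sum => k _.
  have := @mvt_bound0 R (fun s => F (x + h *: wk w k + s *: evec R k))
    (fun s => pder F k (x + h *: wk w k + s *: evec R k)) (h * w 0 k) (pder F k x) e'.
  have E : x + h *: wk w k + (h * w 0 k) *: evec R k = x + h *: wk w k.+1.
    by rewrite -addrA wkS.
  rewrite /= scale0r addr0 E normrM [pder F k x * _]mulrC; apply.
  move=> t ht.
  set z := x + h *: wk w k + t *: evec R k.
  have [Uz Hj] : U z /\ forall j, `|pder F j z - pder F j x| <= e'.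
    apply: Hr; rewrite /ball_ /= /z -addrA opprD addNKr normrN.
    apply: le_lt_trans hw; apply: mxnorm_le => [|j]; first by rewrite mulr_ge0.
    rewrite !mxE eqxx /=.
    case: (ltngtP j k) => jk.
    - by rewrite -val_eqE /= (ltn_eqF jk) mulr0 addr0 normrM ler_wpM2l // mxnorm_entry.
    - by rewrite -val_eqE /= (gtn_eqF jk) !mulr0 addr0 normr0 mulr_ge0.
    - rewrite -val_eqE /= jk eqxx mulr0 add0r mulr1.
      by apply: le_trans ht _; rewrite ler_wpM2l // mxnorm_entry.
  split; last exact: Hj.
  apply: line_deriv; exact: derivableP (Hd k z Uz).
have -> : L - h^-1 *: (F (h *: w + x) - F x) =
    - (h^-1 * (F (h *: w + x) - F x - h * L)).
  by rewrite /GRing.scale /=; field.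
rewrite normrN normrM normfV.
apply: le_trans (_ : `|h|^-1 * (e' * (`|h| * Sw)) <= e).
  by rewrite ler_wpM2l // invr_ge0.
rewrite mulrCA mulKf ?normr_eq0 // /e' mulrAC.
rewrite ler_pdivrMr ?ltr_wpDl // ler_wpM2l ?(ltW e0) //.
by rewrite lerDl.
Unshelve. all: by end_near.
Qed.

End Aux3.
Section Norm2.
Variables (R : realType) (n : nat).
Implicit Types (u v : 'rV[R]_n).

Lemma sumsq_ge0 v : 0 <= \sum_i v 0 i ^+ 2.
Proof. by apply: sumr_ge0 => i _; rewrite sqr_ge0. Qed.

Lemma norm2_ge0 v : 0 <= norm2 v.
Proof. exact: sqrtr_ge0. Qed.

Lemma norm2_sq v : norm2 v ^+ 2 = \sum_i v 0 i ^+ 2.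
Proof. by rewrite /norm2 sqr_sqrtr // sumsq_ge0. Qed.

Lemma norm2_eq0 v : norm2 v = 0 -> v = 0.
Proof.
move=> H; have : \sum_i v 0 i ^+ 2 = 0 by rewrite -norm2_sq H expr0n.
move=> /psumr_eq0P H2; apply/rowP => i; rewrite mxE.
by apply/eqP; rewrite -sqrf_eq0; apply/eqP; apply: H2 => // j _; rewrite sqr_ge0.
Qed.

Lemma norm2Z (c : R) v : norm2 (c *: v) = `|c| * norm2 v.
Proof.
rewrite /norm2 (eq_bigr (fun i => c ^+ 2 * v 0 i ^+ 2)); last first.
  by move=> i _; rewrite mxE exprMn.
by rewrite -mulr_sumr sqrtrM ?sqr_ge0 // sqrtr_sqr.
Qed.

Lemma norm2_entry v i : `|v 0 i| <= norm2 v.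
Proof.
rewrite -sqrtr_sqr /norm2 ler_wsqrtr // (bigD1 i) //= lerDl.
by apply: sumr_ge0 => j _; rewrite sqr_ge0.
Qed.

Lemma sumsq_le (t : 'I_n -> R) : (forall i, 0 <= t i) ->
  \sum_i t i ^+ 2 <= (\sum_i t i) ^+ 2.
Proof.
move=> t0; rewrite expr2 mulr_suml; apply: ler_sum => i _.
rewrite expr2 ler_wpM2l // (bigD1 i) //= lerDl.
by apply: sumr_ge0.
Qed.

Lemma norm2_le_sum v : norm2 v <= \sum_i `|v 0 i|.
Proof.
rewrite -[X in _ <= X]ger0_norm ?sumr_ge0 // -sqrtr_sqr /norm2 ler_wsqrtr //.
rewrite (eq_bigr (fun i => `|v 0 i| ^+ 2)); last first.
  by move=> i _; rewrite real_normK // num_real.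
by apply: sumsq_le.
Qed.

Lemma CS u v : `|dotv u v| <= norm2 u * norm2 v.
Proof.
have [a0|a0] := eqVneq (norm2 u) 0.
  by rewrite (norm2_eq0 _ a0) /dotv big1 ?normr0 ?mulr_ge0 ?norm2_ge0 // => i _; rewrite mxE mul0r.
have [b0|b0] := eqVneq (norm2 v) 0.
  by rewrite (norm2_eq0 _ b0) /dotv big1 ?normr0 ?mulr_ge0 ?norm2_ge0 // => i _; rewrite mxE mulr0.
set a := norm2 u; set b := norm2 v.
have ap : 0 < a by rewrite lt_def a0 norm2_ge0.
have bp : 0 < b by rewrite lt_def b0 norm2_ge0.
have E (s : R) : \sum_i (b * u 0 i + s * a * v 0 i) ^+ 2 =
   b ^+ 2 * (\sum_i u 0 i ^+ 2) + 2 * s * a * b * dotv u v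
   + s ^+ 2 * a ^+ 2 * (\sum_i v 0 i ^+ 2).
  rewrite /dotv !mulr_sumr -!big_split /=.
  by apply: eq_bigr => i _; ring.
rewrite -!norm2_sq -/a -/b in E.
have P (s : R) : 0 <= b ^+ 2 * a ^+ 2 + 2 * s * a * b * dotv u v + s ^+ 2 * a ^+ 2 * b ^+ 2.
  by rewrite -E; apply: sumr_ge0 => i _; rewrite sqr_ge0.
have P1 := P 1; have P2 := P (-1).
have ab : 0 < a * b by rewrite mulr_gt0.
rewrite ler_norml; apply/andP; split; nra.
Qed.

Lemma spec_bound (M : 'M[R]_n) (lam : R) : spec_norm M <= lam ->
  forall v, norm2 (v *m M^T) <= lam * norm2 v.
Proof.
move=> HM v.
set S := [set norm2 (v *m M^T) | v in [set v : 'rV[R]_n | norm2 v <= 1]].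
have hS : has_ubound S.
  exists (\sum_i \sum_j `|M i j|) => _ [u /= u1 <-].
  apply: le_trans (norm2_le_sum _) _; apply: ler_sum => i _.
  rewrite mxE; apply: le_trans (ler_norm_sum _ _ _) _; apply: ler_sum => j _.
  rewrite mxE normrM -[X in _ <= X]mul1r ler_wpM2r //.
  exact: le_trans (norm2_entry _ _) u1.
have [v0|v0] := eqVneq (norm2 v) 0.
  rewrite v0 mulr0 (norm2_eq0 _ v0) mul0mx.
  by rewrite -(scale0r (0 : 'rV[R]_n)) norm2Z normr0 mul0r.
have vp : 0 < norm2 v by rewrite lt_def v0 norm2_ge0.
set c := (norm2 v)^-1.
have cp : 0 < c by rewrite invr_gt0.
have Su : S (norm2 ((c *: v) *m M^T)).
  exists (c *: v) => //=; rewrite norm2Z gtr0_norm // mulVf //.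
have := le_trans (ub_le_sup hS Su) HM.
rewrite -scalemxAl norm2Z gtr0_norm // /c.
by rewrite ler_pdivrMl // mulrC.
Qed.

End Norm2.
Section Seg.
Variables (R : realType) (n : nat) (J : 'rV[R]_n -> R) (U : set 'rV[R]_n)
  (xc d : 'rV[R]_n) (eps lam : R).
Hypotheses (oU : open U) (C2 : C2_on U J) (sub : boxX xc eps `<=` U)
  (HH : forall x, boxX xc eps x -> spec_norm (hess J x) <= lam) (hd : `|d| <= eps).

Lemma z_box t : 0 <= t <= 1 -> boxX xc eps (xc + t *: d).
Proof.
case/andP => t0 t1; rewrite /boxX /= addrAC subrr add0r normrZ ger0_norm //.
by apply: le_trans hd; rewrite ler_piMl.
Qed.

Lemma cont_at (f : 'rV[R]_n -> R) z : {within U, continuous f} -> U z ->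
  {for z, continuous f}.
Proof. by rewrite continuous_open_subspace // => H Uz; apply: H; rewrite inE. Qed.

Lemma deriv_J (s : R) : 0 <= s <= 1 ->
  is_derive s 1 (fun s => J (xc + s *: d)) (dotv (grad J (xc + s *: d)) d).
Proof.
move=> hs; have Uz := sub _ (z_box _ hs).
case: C2 => _ [HdJ [HcJ _]].
apply: line_deriv; apply: is_derive_eq.
  apply: (@dir_deriv R n _ U) => // j; exact: cont_at.
by rewrite /dotv; apply: eq_bigr => i _; rewrite mxE mulrC.
Qed.

Lemma deriv_grad w (s : R) : 0 <= s <= 1 ->
  is_derive s 1 (fun s => dotv (grad J (xc + s *: d)) w)
    (dotv (d *m (hess J (xc + s *: d))^T) w).
Proof.
move=> hs; have Uz := sub _ (z_box _ hs).
case: C2 => _ [_ [_ [Hd2 Hc2]]].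
have E : (fun s => dotv (grad J (xc + s *: d)) w) =
   \sum_i (w 0 i \*: (fun s => pder J i (xc + s *: d))).
  apply/funext => t; rewrite fct_sumE /dotv; apply: eq_bigr => i _.
  by rewrite mxE /= mulrC.
rewrite E; apply: is_derive_eq.
  apply: is_derive_sum => i; apply: is_deriveZ; apply: line_deriv.
  apply: (@dir_deriv R n _ U) => //; first exact: Hd2.
  move=> j; exact: cont_at (Hc2 i j) Uz.
rewrite /dotv.
rewrite -[LHS]/(\sum_(i < n) w 0 i * \sum_j d 0 j * pder (pder J i) j (xc + s *: d)).
apply: eq_bigr => i _; rewrite [in RHS]mulrC mxE.
congr (_ * _); apply: eq_bigr => j _; rewrite !mxE.
by [].
Qed.

Lemma seg_L w t : 0 <= t <= 1 ->
  dotv (grad J (xc + t *: d)) w - dotv (grad J xc) w <= lam * t * (norm2 w * norm2 d).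
Proof.
case/andP => t0 t1.
have := @mvt_bound R (fun s => dotv (grad J (xc + s *: d)) w)
  (fun s => dotv (d *m (hess J (xc + s *: d))^T) w) 0 t 0 (lam * (norm2 w * norm2 d)) t0.
rewrite /= scale0r addr0 !subr0 mul0r subr0 => H.
apply: le_trans (ler_norm _) _; rewrite -mulrA [t * _]mulrC mulrA; apply: H.
move=> s /andP[s0 st].
have hs : 0 <= s <= 1 by rewrite s0 (le_trans st t1).
split; first exact: deriv_grad.
rewrite subr0; apply: le_trans (CS _ _ _ _) _.
rewrite [norm2 w * _]mulrC mulrA ler_wpM2r ?norm2_ge0 //.
by apply: spec_bound; apply: HH; apply: z_box.
Qed.

Lemma is_derive_sq (c t : R) : is_derive t 1 (fun s : R => c * (s * s)) (c * (2 * t)).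
Proof.
have := is_deriveZ c (is_deriveM (@is_derive_id _ R t 1) (@is_derive_id _ R t 1)).
move=> H; apply: is_derive_eq H _.
by rewrite /GRing.scale /= !mulr1 mulr2n mulrDl !mul1r.
Qed.

Lemma seg_A eta : 0 <= eta <= 1 ->
  J (xc + eta *: d) <= J xc + eta * dotv (grad J xc) d + lam / 2 * (eta * eta) * norm2 d ^+ 2.
Proof.
case/andP => e0 e1.
set K := dotv (grad J xc) d; set D2 := norm2 d ^+ 2.
pose k s := J (xc + s *: d) - K * s - (lam / 2 * D2) * (s * s).
pose dk s := dotv (grad J (xc + s *: d)) d - K - (lam / 2 * D2) * (2 * s).
have Hk : forall s, 0 <= s <= eta -> is_derive s 1 k (dk s).
  move=> s /andP[s0 se].
  have hs : 0 <= s <= 1 by rewrite s0 (le_trans se e1).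
  exact: is_deriveB (is_deriveB (deriv_J _ hs) (is_derive_lin _ K s)) (is_derive_sq _ s).
have [c [hc E]] := mvt_ex _ _ _ _ _ e0 Hk.
have : dk c <= 0.
  case/andP: hc => c0 ce.
  have hc1 : 0 <= c <= 1 by rewrite c0 (le_trans ce e1).
  have := seg_L d _ hc1; rewrite -/K /dk /D2 -expr2.
  move=> H; rewrite subr_le0.
  apply: le_trans H _.
  have -> : lam / 2 * norm2 d ^+ 2 * (2 * c) = lam * c * norm2 d ^+ 2 by field.
  by [].
move=> dk0.
have : k eta - k 0 <= 0 by rewrite E subr0 mulr_le0_ge0.
rewrite /k scale0r addr0 !mul0r mulr0 !subr0 subr_le0.
rewrite mulr0 subr0 => H.
have -> : eta * K = K * eta by rewrite mulrC.
have -> : lam / 2 * (eta * eta) * D2 = lam / 2 * D2 * (eta * eta) by rewrite mulrAC.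
rewrite -lerBlDr -lerBlDr; lra.
Qed.

End Seg.
Section Coord.
Variable R : realType.

Lemma sq1 (s : R) : s * s = 1 -> s = 1 \/ s = -1.
Proof.
move=> H; have : (s - 1) * (s + 1) = 0 by rewrite mulrDr !mulrBl H; ring.
move/eqP; rewrite mulf_eq0 => /orP[/eqP|/eqP] E.
  by left; apply/eqP; rewrite -subr_eq0 E.
by right; apply/eqP; rewrite -subr_eq0 opprK E.
Qed.

Lemma key_coord (g d s eps eta lam D : R) : s * s = 1 -> `|d| <= eps ->
  0 < lam -> 0 <= eta -> lam * eta * (D + eps) <= s * g ->
  eta * (g * (eps * s)) + lam / 2 * (eta * eta) * (eps * s) ^+ 2
  + g * (d - eta * (eps * s)) + lam * eta * D * (eps - s * d)
  + lam * eta * (1 - eta) * (eps * s) ^+ 2 + lam / 2 * (d - eta * (eps * s)) ^+ 2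
  <= g * (eps * s) + lam / 2 * (eps * s) ^+ 2.
Proof.
move=> /sq1 [->|->]; move=> /ler_normlP [d1 d2] l0 e0 H; rewrite -subr_ge0.
- have -> : g * (eps * 1) + lam / 2 * (eps * 1) ^+ 2 -
   (eta * (g * (eps * 1)) + lam / 2 * (eta * eta) * (eps * 1) ^+ 2 +
    g * (d - eta * (eps * 1)) + lam * eta * D * (eps - 1 * d) +
    lam * eta * (1 - eta) * (eps * 1) ^+ 2 +
    lam / 2 * (d - eta * (eps * 1)) ^+ 2) =
   (eps - d) * ((g - lam * eta * (D + eps)) + lam / 2 * (eps + d)) by field.
  apply: mulr_ge0; first by lra.
  rewrite mul1r in H; apply: addr_ge0; first by lra.
  by apply: mulr_ge0; [apply: divr_ge0; lra| lra].
- have -> : g * (eps * -1) + lam / 2 * (eps * -1) ^+ 2 -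
   (eta * (g * (eps * -1)) + lam / 2 * (eta * eta) * (eps * -1) ^+ 2 +
    g * (d - eta * (eps * -1)) + lam * eta * D * (eps - -1 * d) +
    lam * eta * (1 - eta) * (eps * -1) ^+ 2 +
    lam / 2 * (d - eta * (eps * -1)) ^+ 2) =
   (eps + d) * ((- g - lam * eta * (D + eps)) + lam / 2 * (eps - d)) by field.
  apply: mulr_ge0; first by lra.
  rewrite mulN1r in H; apply: addr_ge0; first by lra.
  by apply: mulr_ge0; [apply: divr_ge0; lra| lra].
Qed.

Lemma key_w (d s eps eta : R) : s * s = 1 -> `|d| <= eps -> 0 <= eta <= 1 ->
  (d - eta * (eps * s)) ^+ 2 <= (1 - eta) ^+ 2 * (eps * s) ^+ 2 + (eps - s * d) ^+ 2.
Proof.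
move=> /sq1 [->|->] /ler_normlP [d1 d2] /andP[e0 e1]; rewrite -subr_ge0.
- have -> : (1 - eta) ^+ 2 * (eps * 1) ^+ 2 + (eps - 1 * d) ^+ 2 -
     (d - eta * (eps * 1)) ^+ 2 = 2 * ((1 - eta) * eps) * (eps - d) by ring.
  by apply: mulr_ge0; [apply: mulr_ge0; [lra|apply: mulr_ge0; lra]|lra].
- have -> : (1 - eta) ^+ 2 * (eps * -1) ^+ 2 + (eps - -1 * d) ^+ 2 -
     (d - eta * (eps * -1)) ^+ 2 = 2 * ((1 - eta) * eps) * (eps + d) by ring.
  by apply: mulr_ge0; [apply: mulr_ge0; [lra|apply: mulr_ge0; lra]|lra].
Qed.

End Coord.

Theorem proposition5 (R : realType) (n0 : nat) (xc : 'rV[R]_n0) (eps lam : R)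
  (J : 'rV[R]_n0 -> R) (eta : R) :
  0 < eps -> 0 < lam ->
  (exists U : set 'rV[R]_n0, open U /\ boxX xc eps `<=` U /\ C2_on U J) ->
  (forall x, boxX xc eps x -> spec_norm (hess J x) <= lam) ->
  let dhat := eps *: sgv (grad J xc) in
  0 <= eta -> eta <= 1 ->
  (grad J xc != 0 ->
     forall i, eta <= `|grad J xc 0 i| / (lam * (norm2 dhat + `|dhat 0 i|))) ->
  Jbar1 J lam (boxX xc eps) (xc + eta *: dhat)
    <= Jbar1 J lam (boxX xc eps) xc.
Proof.
move=> e0 l0 [U [oU [sub C2]]] HH dhat et0 et1 Heta.
have [->|eta0] := eqVneq eta 0; first by rewrite scale0r addr0.
have [g0|gn0] := eqVneq (grad J xc) 0.
  have -> : dhat = 0.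
    by rewrite /dhat g0; apply/rowP => i; rewrite !mxE sgr0 mulr0.
  by rewrite scaler0 addr0.
have etap : 0 < eta by rewrite lt_def eta0 et0.
have Hi := Heta gn0.
set g := grad J xc.
set D := norm2 dhat.
have D0 : 0 <= D by exact: norm2_ge0.
have dhE i : dhat 0 i = eps * Num.sg (g 0 i) by rewrite !mxE.
have gi0 i : g 0 i != 0.
  apply/negP => /eqP gz; have := Hi i; rewrite gz normr0 mul0r => H.
  by move: etap; rewrite ltNge H.
have s2 i : Num.sg (g 0 i) * Num.sg (g 0 i) = 1 by rewrite -expr2 sqr_sg gi0.
have Gi i : lam * eta * (D + eps) <= Num.sg (g 0 i) * g 0 i.
  rewrite -normrEsg; have := Hi i.
  rewrite dhE normrM (gtr0_norm e0) normr_sg gi0 mulr1.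
  have DE : 0 < D + eps by rewrite ltr_wpDl.
  rewrite ler_pdivlMr ?mulr_gt0 //.
  by move=> H; apply: le_trans H; rewrite /D mulrA [eta * lam]mulrC.
have hd : `|dhat| <= eps.
  apply: mxnorm_le => [|i]; first exact: ltW.
  by rewrite dhE normrM (gtr0_norm e0) normr_sg gi0 mulr1.
have hdi x i : boxX xc eps x -> `|(x - xc) 0 i| <= eps.
  by move=> hx; apply: le_trans (mxnorm_entry _ _ _ _) hx.
set B := dotv g dhat + lam / 2 * D ^+ 2.
have hub x : boxX xc eps x -> dotv g (x - xc) + lam / 2 * norm2 (x - xc) ^+ 2 <= B.
  move=> hx; rewrite /B /D /dotv !norm2_sq !mulr_sumr -!big_split /=.
  apply: ler_sum => i _; rewrite dhE.
  have hd1 := hdi x i hx.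
  set d := (x - xc) 0 i; set s := Num.sg (g 0 i).
  have G : s * g 0 i = `|g 0 i| by rewrite normrEsg.
  have h1 : g 0 i * d <= `|g 0 i| * eps.
    by apply: le_trans (ler_norm _) _; rewrite normrM ler_wpM2l.
  have h2 : d ^+ 2 <= eps ^+ 2.
    by rewrite -real_normK ?num_real // lerXn2r // ?nnegrE // ltW.
  have -> : g 0 i * (eps * s) = eps * `|g 0 i| by rewrite -G; ring.
  have -> : (eps * s) ^+ 2 = eps ^+ 2 by rewrite exprMn sqr_sg gi0 mulr1.
  have l2 : 0 <= lam / 2 by rewrite divr_ge0 // ltW.
  have := ler_wpM2l l2 h2; lra.
have hSx : has_ubound [set dotv (grad J xc) (x - xc) + lam / 2 * norm2 (x - xc) ^+ 2
                       | x in boxX xc eps].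
  by exists B => _ [x hx <-]; exact: hub.
have supx : B <= sup [set dotv (grad J xc) (x - xc) + lam / 2 * norm2 (x - xc) ^+ 2
                       | x in boxX xc eps].
  apply: (ub_le_sup hSx); exists (xc + dhat).
    by rewrite /boxX /= addrAC subrr add0r.
  by rewrite addrAC subrr add0r.
rewrite /Jbar1.
set y := xc + eta *: dhat.
suff : sup [set dotv (grad J y) (x - y) + lam / 2 * norm2 (x - y) ^+ 2
           | x in boxX xc eps] <= J xc + B - J y.
  move: supx; rewrite -/g; lra.
apply: ge_sup.
  exists (dotv (grad J y) (xc - y) + lam / 2 * norm2 (xc - y) ^+ 2); exists xc => //.
  by rewrite /boxX /= subrr normr0 ltW.
move=> _ [x hx <-].
have et01 : 0 <= eta <= 1 by rewrite et0 et1.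
have hA := @seg_A _ _ _ _ _ _ _ _ oU C2 sub HH hd _ et01.
have hL := @seg_L _ _ _ _ _ _ _ _ oU C2 sub HH hd (x - y) _ et01.
rewrite -/g -/D -/y in hA hL.
have wE i : (x - y) 0 i = (x - xc) 0 i - eta * (eps * Num.sg (g 0 i)).
  by rewrite /y !mxE; ring.
set T := \sum_i (eps - Num.sg (g 0 i) * (x - xc) 0 i).
have hT : 0 <= T.
  apply: sumr_ge0 => i _; rewrite subr_ge0; apply: le_trans (ler_norm _) _.
  by rewrite normrM normr_sg gi0 mul1r hdi.
have hw : norm2 (x - y) <= (1 - eta) * D + T.
  have hp : 0 <= (1 - eta) * D + T by rewrite addr_ge0 // mulr_ge0 // subr_ge0.
  rewrite -[X in _ <= X]ger0_norm // -sqrtr_sqr /norm2 ler_wsqrtr //.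
  apply: le_trans (_ : \sum_i ((1 - eta) ^+ 2 * (eps * Num.sg (g 0 i)) ^+ 2
          + (eps - Num.sg (g 0 i) * (x - xc) 0 i) ^+ 2) <= _).
    apply: ler_sum => i _; rewrite wE; apply: key_w => //; exact: hdi.
  rewrite big_split /= -mulr_sumr.
  have -> : \sum_i (eps * Num.sg (g 0 i)) ^+ 2 = D ^+ 2.
    by rewrite /D norm2_sq; apply: eq_bigr => i _; rewrite dhE.
  apply: le_trans (_ : (1 - eta) ^+ 2 * D ^+ 2 + T ^+ 2 <= _).
    rewrite lerD2l; apply: sumsq_le => i; rewrite subr_ge0.
    apply: le_trans (ler_norm _) _.
    by rewrite normrM normr_sg gi0 mul1r hdi.
  have : 0 <= (1 - eta) * D * T by rewrite mulr_ge0 // mulr_ge0 // subr_ge0.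
  move=> H.
  have -> : ((1 - eta) * D + T) ^+ 2 = (1 - eta) ^+ 2 * D ^+ 2 + T ^+ 2 + 2 * ((1 - eta) * D * T) by ring.
  lra.
have hS : eta * dotv g dhat + lam / 2 * (eta * eta) * D ^+ 2 + dotv g (x - y)
    + lam * eta * D * T + lam * eta * (1 - eta) * D ^+ 2
    + lam / 2 * norm2 (x - y) ^+ 2 <= dotv g dhat + lam / 2 * D ^+ 2.
  rewrite {1 3 4}/D /dotv !norm2_sq /T !mulr_sumr -!big_split /=.
  apply: ler_sum => i _; rewrite !dhE !wE.
  by apply: key_coord => //; exact: hdi.
have hP : lam * eta * (norm2 (x - y) * D) <=
    lam * eta * D * T + lam * eta * (1 - eta) * D ^+ 2.
  have c0 : 0 <= lam * eta * D by rewrite !mulr_ge0 // ltW.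
  have := ler_wpM2l c0 hw.
  have -> : lam * eta * D * ((1 - eta) * D + T) =
    lam * eta * D * T + lam * eta * (1 - eta) * D ^+ 2 by ring.
  by move=> H; apply: le_trans H; rewrite [norm2 _ * D]mulrC mulrA.
rewrite /B; lra.
Qed.
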